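(* Let $\mathcal M,\mathcal N$ be finite polyptych lattices over $F$, let $F\subseteq F'\subseteq\mathbb R$, and let $(\mathcal M,\mathcal N,\mathsf v,\mathsf w)$ be a strict dual $F'$-pair. Then $\mathsf w$ and $\mathsf v$ extend to isomorphisms of $F_{\ge0}$-semialgebras $\mathsf w:S_{\mathcal N_{F'}}\to P_{\mathcal M_{F'}}$ and $\mathsf v:S_{\mathcal M_{F'}}\to P_{\mathcal N_{F'}}$, given by $\mathsf w(\bigoplus_{n\in S}n)=\min_{n\in S}\mathsf w(n)$ (pointwise minimum of functions), $\mathsf w(\infty)=\infty$, and similarly for $\mathsf v$.
   Context: Fix a subring $F$ with $\mathbb Z\subseteq F\subseteq\mathbb R$. A polyptych lattice of rank $r$ over $F$ is a collection $\{M_\alpha\}_{\alpha\in I}$ of free $F$-modules of rank $r$ with piecewise $F$-linear maps (continuous and $F$-linear on each cone of some complete $F$-rational fan) $\mu_{\alpha,\beta}:M_\alpha\to M_\beta$ with $\mu_{\alpha,\alpha}=\mathrm{id}$, $\mu_{\alpha,\beta}=\mu_{\beta,\alpha}^{-1}$, $\mu_{\beta,\gamma}\circ\mu_{\alpha,\beta}=\mu_{\alpha,\gamma}$; finite if $I$ is finite. Elements are classes of $\bigsqcup M_\alpha$ under $m_\alpha\sim\mu_{\alpha,\beta}(m_\alpha)$; $\pi_\alpha$ chart maps; $\mathcal M_{F'}$ has charts $M_\alpha\otimes_FF'$ (extended mutations), e.g. $\mathcal M_{\mathbb R}$. $m+_\alpha m':=\pi_\alpha^{-1}(\pi_\alpha(m)+\pi_\alpha(m'))$,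 $\lambda m:=\pi_\alpha^{-1}(\lambda\pi_\alpha(m))$ ($\lambda\ge 0$). $\Sigma(\mathcal M)$: the coarsest complete fan of cones of $\mathcal M_{\mathbb R}$ (subsets whose chart images are $F$-rational polyhedral cones) on whose chart images all mutations are linear. A point of $\mathcal M_{F'}$ is $p:\mathcal M_{F'}\to F'$ with $p(m)+p(m')=\min_\alpha p(m+_\alpha m')$ and $p(\lambda m)=\lambda p(m)$ ($\lambda\in F'_{\ge0}$); $\mathrm{Sp}_{F'}(\mathcal M)$ is the set of such; $\mathrm{Sp}_{\mathbb R}(\mathcal M,\alpha)$ is the set of $p\in\mathrm{Sp}_{\mathbb R}(\mathcal M)$ linear on chart $\alpha$. Strict dual $F'$-pair: maps $\mathsf v:\mathcal M_{\mathbb R}\to\mathrm{Sp}_{\mathbb R}(\mathcal N)$, $\mathsf w:\mathcal N_{\mathbb R}\to\mathrm{Sp}_{\mathbb R}(\mathcal M)$ with (1) $\mathsf v(\mathcal M_{F'})\subseteq\mathrm{Sp}_{F'}(\mathcal N)$, $\mathsf w(\mathcal N_{F'})\subseteq\mathrm{Sp}_{F'}(\mathcal M)$; (2) $\mathsf v(m)(n)=\mathsf w(n)(m)$ for $m\in\mathcal M_{F'},n\in\mathcal N_{F'}$; (3) these restrictions are bijections; (4) the sets $\mathsf v^{-1}(\mathrm{Sp}_{\mathbb R}(\mathcal N,\gamma))$, $\gamma$ ranging over chart indices of $\mathcal N$, are exactly the maximal-dimensional cones of $\Sigma(\mathcal M)$, and symmetrically for $\mathsf w$. Point-convex hull: $\mathcal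 H_{p,a}=\{m:p(m)\ge a\}$, $\mathrm{p\text{-}conv}_{F'}(S)=\bigcap\{\mathcal H_{p,a}:p\in\mathrm{Sp}_{F'}(\mathcal M),a\in F',S\subseteq\mathcal H_{p,a}\}$. Canonical semialgebra $S_{\mathcal M_{F'}}$: free commutative idempotent semigroup ($\oplus$) on elements of $\mathcal M_{F'}$ modulo $\bigoplus_{S}m=\bigoplus_{S'}m$ when $\mathrm{p\text{-}conv}_{F'}(S)=\mathrm{p\text{-}conv}_{F'}(S')$, plus identity $\infty$, with product $m\star m'=\bigoplus_\alpha(m+_\alpha m')$ extended distributively and $F_{\ge 0}$-action by scaling elements. The point semialgebra $P_{\mathcal M_{F'}}$ is the sub-semialgebra of functions $\mathcal M_{\mathbb R}\to\mathbb R\cup\{\infty\}$ (operations pointwise $\min$ and pointwise $+$, scaling by $F_{\ge0}$) generated by $\mathrm{Sp}_{F'}(\mathcal M)$ (extended to $\mathcal M_{\mathbb R}$), together with $\infty$. *)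

(* Defs.v *)
From HB Require Import structures.
From mathcomp Require Import all_boot all_order all_algebra.
From mathcomp Require Import Rstruct.
From Stdlib Require List.
Unset Printing Implicit Defensive.
Import Order.TTheory GRing.Theory Num.Theory.
Local Open Scope ring_scope.

Notation RR := Rdefinitions.R.

Definition is_subring (F : RR -> Prop) : Prop :=
  F 0 /\ F 1 /\ (forall x y, F x -> F y -> F (x - y)) /\
  (forall x y, F x -> F y -> F (x * y)).

Definition Rall : RR -> Prop := fun _ => True.

Definition Fvec (G : RR -> Prop) {r : nat} (x : 'rV[RR]_r) : Prop :=
  forall i, G (x ord0 i).

Definition Fmx (G : RR -> Prop) {r : nat} (A : 'M[RR]_r) : Prop :=
  forall i j, G (A i j).

Definition setE {T : Type} (A B : T -> Prop) : Prop := forall x, A x <-> B x.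

Definition lin {r : nat} (u x : 'rV[RR]_r) : RR := \sum_(i < r) u ord0 i * x ord0 i.

Definition cone_hull {r : nat} (gs : seq ('rV[RR]_r)) : ('rV[RR]_r) -> Prop :=
  fun x => exists c : nat -> RR, (forall i, 0 <= c i) /\
    x = \sum_(i < size gs) c i *: gs`_i.

Definition F_rat_cone (F : RR -> Prop) {r : nat} (K : ('rV[RR]_r) -> Prop) : Prop :=
  exists gs : seq ('rV[RR]_r),
    (forall i, (i < size gs)%N -> Fvec F gs`_i) /\ setE K (cone_hull gs).

Definition face_of {r : nat} (K' K : ('rV[RR]_r) -> Prop) : Prop :=
  exists u : 'rV[RR]_r, (forall x, K x -> 0 <= lin u x) /\
    setE K' (fun x => K x /\ lin u x = 0).

Definition complete_fan (F : RR -> Prop) {r : nat} (S : seq (('rV[RR]_r) -> Prop)) : Prop :=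
  (forall K, List.In K S -> F_rat_cone F K) /\
  (forall K K', List.In K S -> face_of K' K -> exists K'', List.In K'' S /\ setE K'' K') /\
  (forall K1 K2, List.In K1 S -> List.In K2 S ->
     face_of (fun x => K1 x /\ K2 x) K1 /\ face_of (fun x => K1 x /\ K2 x) K2) /\
  (forall x, exists K, List.In K S /\ K x).

(* piecewise F-linear map (given by its R-linear extension on R^r): there is a
   complete F-rational fan on each cone of which f is given by an F-matrix
   (continuity is then automatic). *)
Definition pw_F_linear (F : RR -> Prop) {r : nat} (f : ('rV[RR]_r) -> 'rV[RR]_r) : Prop :=
  exists S, complete_fan F S /\
    forall K, List.In K S -> exists A : 'M[RR]_r, Fmx F A /\ forall x, K x -> f x = x *m A.

(* Each chart M_alpha is identified (via a basis) with F^r ⊆ R^r; mutations are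
   given together with their R-linear extension (the extended mutations).
   The axioms are imposed on the F-points M_alpha = F^r. *)
Record PL (F : RR -> Prop) := {
  pl_rank : nat;
  pl_idx : finType;
  pl_idx0 : pl_idx;
  pl_mu : pl_idx -> pl_idx -> ('rV[RR]_pl_rank) -> 'rV[RR]_pl_rank;
  pl_mu_pw : forall a b, pw_F_linear F (pl_mu a b);
  pl_mu_id : forall a x, Fvec F x -> pl_mu a a x = x;
  pl_mu_inv : forall a b x, Fvec F x -> pl_mu b a (pl_mu a b x) = x;
  pl_mu_comp : forall a b c x, Fvec F x -> pl_mu b c (pl_mu a b x) = pl_mu a c x
}.

Arguments pl_rank {F} p.
Arguments pl_idx {F} p.
Arguments pl_idx0 {F} p.
Arguments pl_mu {F} p _ _ _.

Section PLdefs.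
Context {F : RR -> Prop}.

(* an element of M_R is represented by its family of chart images *)
Definition pt (M : PL F) := pl_idx M -> 'rV[RR]_(pl_rank M).

(* m is an element of M_G (G = F' or R): a coherent family of G-vectors *)
Definition elt (M : PL F) (G : RR -> Prop) (m : pt M) : Prop :=
  (forall a b, m b = pl_mu M a b (m a)) /\ (forall a, Fvec G (m a)).

Definition pinv (M : PL F) (a : pl_idx M) (x : 'rV[RR]_(pl_rank M)) : pt M :=
  fun b => pl_mu M a b x.

Definition addc (M : PL F) (a : pl_idx M) (m m' : pt M) : pt M :=
  pinv M a (m a + m' a).

Definition scale (M : PL F) (l : RR) (m : pt M) : pt M :=
  pinv M (pl_idx0 M) (l *: m (pl_idx0 M)).

Definition minI (M : PL F) (f : pl_idx M -> RR) : RR :=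
  \big[Num.min/f (pl_idx0 M)]_(a : pl_idx M) f a.

(* p is a point of M_G (only its values on M_G matter) *)
Definition is_point (M : PL F) (G : RR -> Prop) (p : pt M -> RR) : Prop :=
  (forall m, elt M G m -> G (p m)) /\
  (forall m m', elt M G m -> elt M G m' ->
     p m + p m' = minI M (fun a => p (addc M a m m'))) /\
  (forall l m, G l -> 0 <= l -> elt M G m -> p (scale M l m) = l * p m).

Definition lin_on_chart (M : PL F) (g : pl_idx M) (p : pt M -> RR) : Prop :=
  exists u, forall x, p (pinv M g x) = lin u x.

Definition chart_img (M : PL F) (a : pl_idx M) (C : pt M -> Prop) :
  ('rV[RR]_(pl_rank M)) -> Prop := fun x => exists m, C m /\ m a = x.

Definition is_Mcone (M : PL F) (C : pt M -> Prop) : Prop :=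
  (forall m, C m -> elt M Rall m) /\ (forall a, F_rat_cone F (chart_img M a C)).

Definition Mface (M : PL F) (C' C : pt M -> Prop) : Prop :=
  (forall m, C' m -> C m) /\ (forall a, face_of (chart_img M a C') (chart_img M a C)).

Definition is_Mfan (M : PL F) (S : seq (pt M -> Prop)) : Prop :=
  (forall C, List.In C S -> is_Mcone M C) /\
  (forall C C', List.In C S -> Mface M C' C -> exists C'', List.In C'' S /\ setE C'' C') /\
  (forall C1 C2, List.In C1 S -> List.In C2 S ->
     Mface M (fun m => C1 m /\ C2 m) C1 /\ Mface M (fun m => C1 m /\ C2 m) C2) /\
  (forall m, elt M Rall m -> exists C, List.In C S /\ C m) /\
  (forall C, List.In C S -> forall a b, exists L : 'M[RR]_(pl_rank M),
     forall x, chart_img M a C x -> pl_mu M a b x = x *m L).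

Definition coarser (M : PL F) (S S' : seq (pt M -> Prop)) : Prop :=
  forall C', List.In C' S' -> exists C, List.In C S /\ forall m, C' m -> C m.

Definition is_Sigma (M : PL F) (S : seq (pt M -> Prop)) : Prop :=
  is_Mfan M S /\ forall S', is_Mfan M S' -> coarser M S S'.

Definition maxdim (M : PL F) (C : pt M -> Prop) : Prop :=
  exists a (B : 'M[RR]_(pl_rank M)), \det B != 0 /\ forall i, chart_img M a C (row i B).

End PLdefs.

Definition half_dual_pair {F : RR -> Prop} (F' : RR -> Prop) (M N : PL F)
  (v : pt M -> pt N -> RR) : Prop :=
  (forall m, elt M Rall m -> is_point N Rall (v m)) /\
  (forall m, elt M F' m -> is_point N F' (v m)) /\
  (* (3) v : M_F' -> Sp_F'(N) is a bijection (points of N_F' compared on N_F') *)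
  (forall m m', elt M F' m -> elt M F' m' ->
     (forall n, elt N F' n -> v m n = v m' n) -> m = m') /\
  (forall p, is_point N F' p ->
     exists m, elt M F' m /\ forall n, elt N F' n -> v m n = p n) /\
  (exists S, is_Sigma M S /\
     (forall g : pl_idx N, exists C, List.In C S /\ maxdim M C /\
         setE C (fun m => elt M Rall m /\ lin_on_chart N g (v m))) /\
     (forall C, List.In C S -> maxdim M C -> exists g : pl_idx N,
         setE C (fun m => elt M Rall m /\ lin_on_chart N g (v m)))).

Definition strict_dual_pair {F : RR -> Prop} (F' : RR -> Prop) (M N : PL F)
  (v : pt M -> pt N -> RR) (w : pt N -> pt M -> RR) : Prop :=
  half_dual_pair F' M N v /\ half_dual_pair F' N M w /\
  (forall m n, elt M F' m -> elt N F' n -> v m n = w n m).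

(* Tropical values R ∪ {∞} (None = ∞)                                  *)

Definition tmin (x y : option RR) : option RR :=
  match x, y with
  | None, _ => y | _, None => x | Some a, Some b => Some (Num.min a b) end.
Definition tadd (x y : option RR) : option RR :=
  match x, y with Some a, Some b => Some (a + b) | _, _ => None end.
Definition tscale (l : RR) (x : option RR) : option RR :=
  match x with Some a => Some (l * a) | None => None end.

(* The canonical semialgebra S_{M_F'} (as a setoid)                    *)
Section Canon.
Context {F : RR -> Prop} (F' : RR -> Prop) (M : PL F).

Definition pconv (s : seq (pt M)) : pt M -> Prop :=
  fun m => elt M F' m /\
    forall (p : pt M -> RR) (a : RR), is_point M F' p -> F' a ->
      (forall x, List.In x s -> a <= p x) -> a <= p m.

(* None = ∞ ; Some s = ⊕_{m ∈ s} m (s a nonempty finite list of elements of M_F') *)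
Definition Scarrier := option (seq (pt M)).

Definition Svalid (x : Scarrier) : Prop :=
  match x with None => True | Some s => s <> [::] /\ forall m, List.In m s -> elt M F' m end.

Definition Seq (x y : Scarrier) : Prop :=
  match x, y with
  | None, None => True
  | Some s, Some s' => setE (pconv s) (pconv s')
  | _, _ => False end.

Definition Soplus (x y : Scarrier) : Scarrier :=
  match x, y with
  | None, _ => y | _, None => x | Some s, Some s' => Some (s ++ s') end.

Definition Sstar (x y : Scarrier) : Scarrier :=
  match x, y with
  | Some s, Some s' =>
      Some (flatten [seq [seq addc M a m m' | a <- enum (pl_idx M)] | m <- s, m' <- s'])
  | _, _ => None end.

Definition Sscale (l : RR) (x : Scarrier) : Scarrier :=
  match x with None => None | Some s => Some [seq scale M l m | m <- s] end.

End Canon.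

Inductive Pgen {F : RR -> Prop} (F' : RR -> Prop) (M : PL F) : (pt M -> option RR) -> Prop :=
| Pg_point (p : pt M -> RR) :
    is_point M Rall p -> is_point M F' p -> Pgen F' M (fun m => Some (p m))
| Pg_inf : Pgen F' M (fun _ => None)
| Pg_min f g : Pgen F' M f -> Pgen F' M g -> Pgen F' M (fun m => tmin (f m) (g m))
| Pg_add f g : Pgen F' M f -> Pgen F' M g -> Pgen F' M (fun m => tadd (f m) (g m))
| Pg_scale (l : RR) f : F l -> 0 <= l -> Pgen F' M f -> Pgen F' M (fun m => tscale l (f m)).

Definition feq {F : RR -> Prop} (M : PL F) (f g : pt M -> option RR) : Prop :=
  forall m, elt M Rall m -> f m = g m.

Definition min_seq (s : seq RR) : RR :=
  match s with [::] => 0 | x :: t => foldr Num.min x t end.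

Definition ext_map {F : RR -> Prop} (M N : PL F) (w : pt N -> pt M -> RR)
  (x : Scarrier N) : pt M -> option RR :=
  match x with
  | None => fun _ => None
  | Some s => fun m => Some (min_seq [seq w n m | n <- s])
  end.

Definition semialg_iso {F : RR -> Prop} (F' : RR -> Prop) (M N : PL F)
  (phi : Scarrier N -> pt M -> option RR) : Prop :=
  (* well defined on classes, and injective *)
  (forall x y, Svalid F' N x -> Svalid F' N y ->
     (Seq F' N x y <-> feq M (phi x) (phi y))) /\
  (forall x, Svalid F' N x -> Pgen F' M (phi x)) /\
  (forall f, Pgen F' M f -> exists x, Svalid F' N x /\ feq M (phi x) f) /\
  (forall x y, Svalid F' N x -> Svalid F' N y ->
     feq M (phi (Soplus N x y)) (fun m => tmin (phi x m) (phi y m))) /\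
  (forall x y, Svalid F' N x -> Svalid F' N y ->
     feq M (phi (Sstar N x y)) (fun m => tadd (phi x m) (phi y m))) /\
  (forall l x, F l -> 0 <= l -> Svalid F' N x ->
     feq M (phi (Sscale N l x)) (fun m => tscale l (phi x m))) /\
  feq M (phi None) (fun _ => None).

(* Main.v *)
Require Import Defs.
From HB Require Import structures.
From mathcomp Require Import all_boot all_order all_algebra.
From mathcomp Require Import Rstruct.
From Stdlib Require Import Classical FunctionalExtensionality.
From mathcomp Require Import ring lra zify.
Set Implicit Arguments. Unset Strict Implicit. Unset Printing Implicit Defensive.
Import Order.TTheory GRing.Theory Num.Theory.
Local Open Scope ring_scope.

Definition nrm {r : nat} (x : 'rV[RR]_r) : RR := \sum_(i < r) `|x ord0 i|.

Lemma nrm_ge0 r (x : 'rV[RR]_r) : 0 <= nrm x.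
Proof. by apply: sumr_ge0 => i _; apply: normr_ge0. Qed.

Lemma nrm_coord r (x : 'rV[RR]_r) i : `|x ord0 i| <= nrm x.
Proof.
rewrite /nrm (bigD1 i) //= lerDl; by apply: sumr_ge0 => j _; apply: normr_ge0.
Qed.

Lemma nrmD r (x y : 'rV[RR]_r) : nrm (x + y) <= nrm x + nrm y.
Proof.
rewrite /nrm -big_split /=; apply: ler_sum => i _; rewrite mxE; exact: ler_normD.
Qed.

Lemma nrmN r (x : 'rV[RR]_r) : nrm (- x) = nrm x.
Proof. by rewrite /nrm; apply: eq_bigr => i _; rewrite mxE normrN. Qed.

Lemma nrmB r (x y : 'rV[RR]_r) : nrm (x - y) = nrm (y - x).
Proof. by rewrite -nrmN opprB. Qed.

Lemma nrmZ r (a : RR) (x : 'rV[RR]_r) : nrm (a *: x) = `|a| * nrm x.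
Proof. by rewrite /nrm mulr_sumr; apply: eq_bigr => i _; rewrite mxE normrM. Qed.

Lemma nrm0P r (x : 'rV[RR]_r) : nrm x = 0 -> x = 0.
Proof.
move=> h; apply/rowP => i; rewrite mxE; apply/normr0_eq0.
apply/eqP; rewrite eq_le normr_ge0 andbT -h; exact: nrm_coord.
Qed.

Lemma nrm_tri r (x y z : 'rV[RR]_r) : nrm (x - z) <= nrm (x - y) + nrm (y - z).
Proof. have -> : x - z = (x - y) + (y - z) by rewrite addrA addrNK. exact: nrmD. Qed.

Definition mxb {m n : nat} (A : 'M[RR]_(m, n)) : RR := \sum_i \sum_j `|A i j|.

Lemma mxb_ge0 m n (A : 'M[RR]_(m, n)) : 0 <= mxb A.
Proof. by apply: sumr_ge0 => i _; apply: sumr_ge0 => j _; apply: normr_ge0. Qed.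

Lemma nrm_mul m n (x : 'rV[RR]_m) (A : 'M[RR]_(m, n)) : nrm (x *m A) <= mxb A * nrm x.
Proof.
rewrite {1}/nrm /mxb mulr_suml.
rewrite (eq_bigr (fun i => \sum_j `|A i j| * nrm x)); last by move=> i _; rewrite mulr_suml.
rewrite exchange_big /=; apply: ler_sum => j _.
rewrite mxE; apply: le_trans (ler_norm_sum _ _ _) _.
apply: ler_sum => i _; rewrite normrM mulrC; apply: ler_wpM2l; first exact: normr_ge0.
exact: nrm_coord.
Qed.

Lemma coord_mul m n (x : 'rV[RR]_m) (A : 'M[RR]_(m, n)) j :
  `|(x *m A) ord0 j| <= mxb A * nrm x.
Proof. exact: le_trans (nrm_coord _ _) (nrm_mul _ _). Qed.

Definition cont {r s : nat} (f : 'rV[RR]_r -> 'rV[RR]_s) (x : 'rV[RR]_r) : Prop :=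
  forall e, 0 < e -> exists2 d, 0 < d & forall y, nrm (y - x) < d -> nrm (f y - f x) < e.

Lemma cont_comp r s t (f : 'rV[RR]_r -> 'rV[RR]_s) (g : 'rV[RR]_s -> 'rV[RR]_t) x :
  cont f x -> cont g (f x) -> cont (fun y => g (f y)) x.
Proof.
move=> cf cg e e0; have [d1 d10 h1] := cg e e0; have [d2 d20 h2] := cf d1 d10.
exists d2 => // y hy; exact: h1 (h2 y hy).
Qed.

Lemma cont_id r (x : 'rV[RR]_r) : cont id x.
Proof. by move=> e e0; exists e. Qed.

Definition intvec {r : nat} (z : 'rV[RR]_r) : Prop :=
  forall i, exists k : int, z ord0 i = k%:~R.

Lemma subring_nat (F : RR -> Prop) : is_subring F -> forall n : nat, F n%:R.
Proof.
move=> [F0 [F1 [FB FM]]]; elim=> [|n ih] //.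
have -> : (n.+1)%:R = n%:R - (0 - 1) :> RR by rewrite mulrS; ring.
by apply: (FB) => //; apply: (FB).
Qed.

Lemma subring_int (F : RR -> Prop) : is_subring F -> forall k : int, F k%:~R.
Proof.
move=> hF k; have [F0 [F1 [FB FM]]] := hF.
case: k => n; first exact: (subring_nat hF n).
have -> : (Negz n)%:~R = 0 - n.+1%:R :> RR by rewrite NegzE mulrNz sub0r.
by apply: (FB) => //; apply: subring_nat.
Qed.

Lemma subringD (F : RR -> Prop) : is_subring F -> forall x y, F x -> F y -> F (x + y).
Proof.
move=> [F0 [F1 [FB FM]]] x y hx hy.
have -> : x + y = x - (0 - y) by rewrite sub0r opprK.
by apply: (FB) => //; apply: (FB).
Qed.

Lemma subringN (F : RR -> Prop) : is_subring F -> forall x, F x -> F (- x).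
Proof. move=> [F0 [F1 [FB FM]]] x hx; rewrite -sub0r; exact: FB. Qed.

Lemma subring_sum (F : RR -> Prop) : is_subring F -> forall (I : finType) (f : I -> RR),
  (forall i, F (f i)) -> F (\sum_i f i).
Proof.
move=> hF I f hf; apply: (big_ind F) => //; first by case: hF.
exact: subringD.
Qed.

Lemma intvec_F (F : RR -> Prop) r (z : 'rV[RR]_r) : is_subring F -> intvec z -> Fvec F z.
Proof. by move=> hF hz i; have [k ->] := hz i; apply: subring_int. Qed.

Definition zapprox {r : nat} (N : nat) (x : 'rV[RR]_r) : 'rV[RR]_r :=
  \row_i ((Num.floor (N%:R * x ord0 i))%:~R).

Lemma zapprox_int r N (x : 'rV[RR]_r) : intvec (zapprox N x).
Proof. by move=> i; rewrite mxE; eexists. Qed.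

Lemma zapprox_close r N (x : 'rV[RR]_r) : (0 < N)%N ->
  nrm (x - N%:R^-1 *: zapprox N x) <= r%:R / N%:R.
Proof.
move=> hN; have hN' : 0 < N%:R :> RR by rewrite ltr0n.
rewrite /nrm; have -> : r%:R / N%:R = \sum_(i < r) N%:R^-1 :> RR.
  by rewrite sumr_const card_ord mulr_natl.
apply: ler_sum => i _; rewrite !mxE.
set y := N%:R * x ord0 i.
have hx : x ord0 i = N%:R^-1 * y by rewrite /y mulrA mulVf ?mul1r // gt_eqF.
have hNi : 0 <= N%:R^-1 :> RR by rewrite invr_ge0 ltW.
rewrite hx -mulrBr normrM (ger0_norm hNi).
rewrite -[leRHS]mulr1; apply: ler_wpM2l => //.
have := floor_itv y; case/andP => h1 h2.
rewrite ger0_norm ?subr_ge0 //; rewrite lerBlDl; rewrite intrD in h2; exact: ltW.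
Qed.

Lemma archi_N (a d : RR) : 0 < d -> exists N : nat, (0 < N)%N /\ a / N%:R < d.
Proof.
move=> d0; exists (Num.truncn (a / d)).+1; split => //.
have hN : 0 < (Num.truncn (a / d)).+1%:R :> RR by rewrite ltr0n.
rewrite ltr_pdivrMr // mulrC -ltr_pdivrMr //; exact: truncnS_gt.
Qed.

Lemma dense_eq r s (f g : 'rV[RR]_r -> 'rV[RR]_s) x :
  (forall z, intvec z -> f z = g z) ->
  (forall a y, 0 < a -> f (a *: y) = a *: f y) ->
  (forall a y, 0 < a -> g (a *: y) = a *: g y) ->
  cont f x -> cont g x -> f x = g x.
Proof.
move=> hfg hf hg cf cg; apply/eqP; rewrite -subr_eq0; apply/eqP; apply: nrm0P.
apply/eqP; rewrite eq_le nrm_ge0 andbT; apply/ler_addgt0Pr => e e0.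
rewrite add0r.
have e20 : 0 < e / 2 by rewrite divr_gt0.
have [d1 d10 h1] := cf _ e20; have [d2 d20 h2] := cg _ e20.
have d0 : 0 < Num.min d1 d2 by rewrite lt_min d10 d20.
have [N [hN hNd]] := archi_N r%:R d0.
set z := zapprox N x; set y := N%:R^-1 *: z.
have hy : nrm (y - x) < Num.min d1 d2.
  by rewrite nrmB; apply: le_lt_trans (zapprox_close _ hN) hNd.
have hNp : 0 < N%:R^-1 :> RR by rewrite invr_gt0 ltr0n.
have efg : f y = g y by rewrite /y hf // hg // hfg //; apply: zapprox_int.
have := h1 y; have := h2 y; rewrite lt_min in hy; case/andP: hy => hy1 hy2.
move=> /(_ hy2) k2 /(_ hy1) k1.
apply: le_trans (nrm_tri _ (f y) _) _; rewrite (nrmB (f x)) {2}efg.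
by rewrite [e]splitr; apply: lerD; apply: ltW.
Qed.

Lemma minle_l (x y : RR) : Num.min x y <= x. Proof. by rewrite ge_min lexx. Qed.
Lemma minle_r (x y : RR) : Num.min x y <= y. Proof. by rewrite ge_min lexx orbT. Qed.

Lemma entryB m n (A B : 'M[RR]_(m, n)) i j : (A - B) i j = A i j - B i j.
Proof. by rewrite !mxE. Qed.
Lemma entryD m n (A B : 'M[RR]_(m, n)) i j : (A + B) i j = A i j + B i j.
Proof. by rewrite !mxE. Qed.

Section Cones.
Variable r : nat.
Implicit Types gs : seq 'rV[RR]_r.

Definition closedset (K : 'rV[RR]_r -> Prop) : Prop :=
  forall x, ~ K x -> exists2 d, 0 < d & forall y, nrm (y - x) < d -> ~ K y.

Lemma closedset_ext (K K' : 'rV[RR]_r -> Prop) : setE K K' -> closedset K' -> closedset K.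
Proof.
move=> e h x hx; have [d d0 hd] := h x (fun k => hx (proj2 (e x) k)).
by exists d => // y hy k; apply: (hd y hy); apply/e.
Qed.

Lemma fin_delta (P : nat -> RR -> Prop) n :
  (forall i d d', P i d -> 0 < d' -> d' <= d -> P i d') ->
  (forall i, (i < n)%N -> exists2 d, 0 < d & P i d) ->
  exists2 d, 0 < d & forall i, (i < n)%N -> P i d.
Proof.
move=> mono; elim: n => [|n ih] h; first by exists 1 => // i.
have [d1 d10 h1] := ih (fun i hi => h i (ltnW hi)).
have [d2 d20 h2] := h n (leqnn _).
exists (Num.min d1 d2); first by rewrite lt_min d10 d20.
move=> i; rewrite ltnS leq_eqVlt => /orP [/eqP -> | hi].
  apply: mono h2 _ _; [by rewrite lt_min d10 d20 | exact: minle_r].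
apply: mono (h1 i hi) _ _; [by rewrite lt_min d10 d20 | exact: minle_l].
Qed.

Definition gmx gs : 'M[RR]_(size gs, r) := \matrix_(i < size gs) gs`_i.

Definition cf_of {k : nat} (c : 'rV[RR]_k) (n : nat) : RR :=
  odflt 0 (omap (fun i : 'I_k => c ord0 i) (insub n)).

Lemma cf_ofE k (c : 'rV[RR]_k) (i : 'I_k) : cf_of c i = c ord0 i.
Proof. by rewrite /cf_of valK. Qed.

Lemma cone_mx gs x : cone_hull gs x <->
  exists c : 'rV[RR]_(size gs), (forall i, 0 <= c ord0 i) /\ x = c *m gmx gs.
Proof.
split.
  case=> c [c0 ->]; exists (\row_i c i); split; first by move=> i; rewrite mxE.
  by rewrite mulmx_sum_row; apply: eq_bigr => i _; rewrite rowK mxE.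
case=> c [c0 ->]; exists (cf_of c); split.
  move=> n; rewrite /cf_of; case: insubP => //= i _ _; exact: c0.
by rewrite mulmx_sum_row; apply: eq_bigr => i _; rewrite rowK cf_ofE.
Qed.

Lemma free_closed k (G : 'M[RR]_(k, r)) : row_free G ->
  closedset (fun y => exists c : 'rV[RR]_k, (forall i, 0 <= c ord0 i) /\ y = c *m G).
Proof.
move=> fG; set L := pinvmx G.
have memE y : (exists c : 'rV[RR]_k, (forall i, 0 <= c ord0 i) /\ y = c *m G) <->
    (y *m L *m G = y /\ forall i, 0 <= (y *m L) ord0 i).
  split.
    case=> c [c0 ->]; split; first by rewrite mulmxKpV // submxMl.
    by rewrite /L mulmxKp.
  by case=> h1 h2; exists (y *m L); split.
move=> x hx.
have [hA | hA] := classic (x *m L *m G = x).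
  have [i hi] : exists i, (x *m L) ord0 i < 0.
    apply: NNPP => hn; apply: hx; apply/memE; split => // i.
    by rewrite leNgt; apply/negP => hi; apply: hn; exists i.
  set a := - (x *m L) ord0 i.
  have a0 : 0 < a by rewrite /a oppr_gt0.
  have b0 : 0 < mxb L + 1 by rewrite ltr_wpDl ?mxb_ge0.
  exists (a / (mxb L + 1)); first by rewrite divr_gt0.
  move=> y hy /memE [_ /(_ i) hyi].
  have := coord_mul (y - x) L i; rewrite mulmxBl entryB.
  move=> h.
  have h2 : mxb L * nrm (y - x) < a.
    apply: (@le_lt_trans _ _ ((mxb L + 1) * nrm (y - x))).

      by apply: ler_wpM2r; [exact: nrm_ge0 | rewrite lerDl].
    by rewrite mulrC -ltr_pdivlMr.
  have := le_lt_trans h h2; rewrite /a => h3.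
  have := ler_norm ((y *m L) ord0 i - (x *m L) ord0 i).
  move=> h4; have := le_lt_trans h4 h3; rewrite ltrBlDr addNr => h5.
  by move: (le_lt_trans hyi h5); rewrite ltxx.
set e := nrm (x *m L *m G - x).
have e0 : 0 < e.
  rewrite lt_def nrm_ge0 andbT; apply/eqP => h; apply: hA.
  by apply/eqP; rewrite -subr_eq0; apply/eqP; apply: nrm0P.
have b0 : 0 < mxb (L *m G) + 1 by rewrite ltr_wpDl ?mxb_ge0.
exists (e / (mxb (L *m G) + 1)); first by rewrite divr_gt0.
move=> y hy /memE [hy1 _].
have h : nrm ((y - x) *m (L *m G) - (y - x)) <= (mxb (L *m G) + 1) * nrm (y - x).
  apply: le_trans (nrmD _ _) _; rewrite nrmN mulrDl mul1r lerD2r; exact: nrm_mul.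
have h2 : (mxb (L *m G) + 1) * nrm (y - x) < e by rewrite mulrC -ltr_pdivlMr.
have := le_lt_trans h h2.
have -> : (y - x) *m (L *m G) - (y - x) = - (x *m L *m G - x).
  by rewrite mulmxBl (mulmxA y) (mulmxA x) hy1 !opprB addrC -addrA addKr.
by rewrite nrmN ltxx.
Qed.

(* Caratheodory step *)
Lemma cara_step k (G : 'M[RR]_(k, r)) (lam c : 'rV[RR]_k) :
  lam != 0 -> lam *m G = 0 -> (forall i, 0 <= c ord0 i) ->
  exists i0 : 'I_k, exists c' : 'rV[RR]_k,
    [/\ forall i, 0 <= c' ord0 i, c' ord0 i0 = 0 & c *m G = c' *m G].
Proof.
wlog hpos : lam / exists i, 0 < lam ord0 i.
  move=> hw hl hG hc.
  have [i hi] : exists i, lam ord0 i != 0.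
    apply: NNPP => hn; move/eqP: hl; apply; apply/rowP => i; rewrite mxE.
    by apply/eqP; apply: NNPP => h; apply: hn; exists i; apply/negP.
  case: (ltrgtP (lam ord0 i) 0) => hs; last by move: hi; rewrite hs eqxx.
    apply: (hw (- lam)) => //; first by exists i; rewrite mxE oppr_gt0.
      by rewrite oppr_eq0.
    by rewrite mulNmx hG oppr0.
  by apply: (hw lam) => //; exists i.
move=> hl hG hc; case: hpos => i1 hi1.
have [j hj hmin] : exists2 j, 0 < lam ord0 j &
    forall i, 0 < lam ord0 i -> c ord0 j / lam ord0 j <= c ord0 i / lam ord0 i.
  have := @arg_minP _ _ _ i1 (fun i => 0 < lam ord0 i) (fun i => c ord0 i / lam ord0 i) hi1.
  by case => j hj h; exists j => // i hi; exact: h.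
set t := c ord0 j / lam ord0 j.
have t0 : 0 <= t by rewrite /t divr_ge0 ?hc ?ltW.
exists j, (c - t *: lam); split.
- move=> i; rewrite !mxE subr_ge0.
  case: (ltrP 0 (lam ord0 i)) => hli.
    by rewrite -ler_pdivlMr //; apply: hmin.
  apply: le_trans (hc i); rewrite mulr_ge0_le0 //.
- by rewrite !mxE /t mulrVK ?subrr // unitfE gt_eqF.
- by rewrite mulmxBl -scalemxAl hG scaler0 subr0.
Qed.

Lemma kernel_vec k (G : 'M[RR]_(k, r)) : ~~ row_free G ->
  exists2 lam : 'rV[RR]_k, lam != 0 & lam *m G = 0.
Proof.
rewrite -kermx_eq0 => hk.
have [i hi] : exists i, row i (kermx G) != 0.
  apply: NNPP => hn; move: hk; apply/negP; rewrite negbK; apply/eqP.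
  apply/row_matrixP => i; rewrite row0; apply/eqP; apply: NNPP => h; apply: hn.
  by exists i; apply/negP.
by exists (row i (kermx G)) => //; rewrite -row_mul mulmx_ker row0.
Qed.

Definition drop_nth (i : nat) gs := take i gs ++ drop i.+1 gs.

Lemma drop_nthE i gs j : (i < size gs)%N ->
  (drop_nth i gs)`_j = gs`_(if (j < i)%N then j else j.+1).
Proof.
move=> hi; rewrite /drop_nth nth_cat size_takel; last exact: ltnW.
case: ifP => hj; first by rewrite nth_take.
by rewrite nth_drop; congr nth; rewrite addSn subnKC // leqNgt hj.
Qed.

Lemma size_drop_nth i gs : (i < size gs)%N -> size (drop_nth i gs) = (size gs).-1.
Proof.
move=> hi; rewrite /drop_nth size_cat size_takel; last exact: ltnW.
rewrite size_drop; move: hi; case: (size gs) => // n; rewrite ltnS => hi.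
by rewrite subSS /= subnKC.
Qed.

Lemma sum_drop (V : zmodType) (G : nat -> V) n i : (i < n)%N -> G i = 0 ->
  \sum_(j < n) G j = \sum_(j < n.-1) G (if (j < i)%N then (j : nat) else j.+1).
Proof.
move=> hi hG.
rewrite -(big_mkord xpredT G) -(big_mkord xpredT (fun j => G (if (j < i)%N then j else j.+1))).
case: n hi => // n hi /=.
rewrite (big_cat_nat _ (n := i)) //=; last exact: ltnW.
rewrite (big_ltn (m := i) (n := n.+1)) // hG add0r.
rewrite (big_cat_nat _ (n := i) (m := 0) (p := n)) //=.
congr (_ + _).
  rewrite big_nat_cond [RHS]big_nat_cond; apply: eq_bigr => j /andP [/andP [_ ->]] //.
rewrite big_add1 /= [RHS]big_nat_cond [LHS]big_nat_cond; apply: eq_bigr => j.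
by case/andP => /andP [hj _] _; rewrite ltnNge hj.
Qed.

Lemma cone_drop i gs y : (i < size gs)%N -> cone_hull (drop_nth i gs) y -> cone_hull gs y.
Proof.
move=> hi [c [c0 ->]].
exists (fun j => if (j < i)%N then c j else if j == i then 0 else c j.-1); split.
  by move=> j; case: ifP => _ //; case: ifP.
rewrite (sum_drop (G := fun j => (if (j < i)%N then c j else if j == i then 0 else c j.-1) *: gs`_j) hi).
  rewrite size_drop_nth //; apply: eq_bigr => j _; rewrite drop_nthE //.
  case: ifP => hj; first by rewrite hj.
  have h1 : (j.+1 < i)%N = false by apply/negbTE; move/negbT: hj; lia.
  have h2 : (j.+1 == i) = false by apply/negbTE; move/negbT: hj; lia.
  by rewrite h1 h2.
by rewrite ltnn eqxx scale0r.
Qed.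

Lemma drop_cone i gs (c : nat -> RR) : (i < size gs)%N -> (forall j, 0 <= c j) -> c i = 0 ->
  cone_hull (drop_nth i gs) (\sum_(j < size gs) c j *: gs`_j).
Proof.
move=> hi c0 ci; exists (fun j => c (if (j < i)%N then j else j.+1)); split => //.
rewrite (sum_drop (G := fun j => c j *: gs`_j) hi) ?ci ?scale0r // size_drop_nth //.
by apply: eq_bigr => j _; rewrite drop_nthE.
Qed.

Lemma cone_closed_n n : forall gs, size gs = n -> closedset (cone_hull gs).
Proof.
elim: n {-2}n (leqnn n) => [|n ih] m hm gs hs.
- apply: (closedset_ext (proj1 (conj (fun x => cone_mx gs x) I))).
  have gs0 : gs = [::] by apply/size0nil; rewrite hs; move: hm; rewrite leqn0 => /eqP.
  subst gs; apply: free_closed; by rewrite /row_free eqn_leq rank_leq_row /=.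
- have [fr | nfr] := boolP (row_free (gmx gs)).
    by apply: (closedset_ext (fun x => cone_mx gs x)); apply: free_closed.
  have [lam l0 lG] := kernel_vec nfr.
  move=> x hx.
  have hsz : (0 < size gs)%N.
    move: nfr {lam l0 lG}; case: gs {hs hx} => //= nfr.
    by move: nfr; rewrite /row_free eqn_leq rank_leq_row.
  pose P := fun i d => forall y, nrm (y - x) < d -> ~ cone_hull (drop_nth i gs) y.
  have [d d0 hd] : exists2 d, 0 < d & forall i, (i < size gs)%N -> P i d.
    apply: fin_delta.
      by move=> i d d' h d'0 hd' y hy; apply: h; apply: lt_le_trans hd'.
    move=> i hi.
    have hsz' : (size (drop_nth i gs) <= n)%N.
      by rewrite size_drop_nth //; move: hm; rewrite -hs; case: (size gs) hi.
    apply: (ih _ hsz' _ erefl) => hc; apply: hx; exact: cone_drop hc.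
  exists d => // y hy /cone_mx [c [c0 hyc]].
  have [i0 [c' [c'0 c'i0 e]]] := cara_step l0 lG c0.
  apply: (hd i0 (ltn_ord i0) y hy).
  have -> : y = \sum_(j < size gs) cf_of c' j *: gs`_j.
    by rewrite hyc e mulmx_sum_row; apply: eq_bigr => j _; rewrite rowK cf_ofE.
  apply: drop_cone => //; last by rewrite cf_ofE.
  by move=> j; rewrite /cf_of; case: insubP => //= i _ _.
Qed.

Lemma cone_closed gs : closedset (cone_hull gs).
Proof. exact: (cone_closed_n erefl). Qed.

End Cones.

Lemma fin_delta_list (T : Type) (S : seq T) (P : T -> RR -> Prop) :
  (forall K d d', P K d -> 0 < d' -> d' <= d -> P K d') ->
  (forall K, List.In K S -> exists2 d, 0 < d & P K d) ->
  exists2 d, 0 < d & forall K, List.In K S -> P K d.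
Proof.
move=> mono; elim: S => [|K S ih] h; first by exists 1.
have [d1 d10 h1] := ih (fun K' hK' => h K' (or_intror hK')).
have [d2 d20 h2] := h K (or_introl erefl).
exists (Num.min d1 d2); first by rewrite lt_min d10 d20.
move=> K' [<- | hK'].
  apply: mono h2 _ _; [by rewrite lt_min d10 d20 | exact: minle_r].
apply: mono (h1 K' hK') _ _; [by rewrite lt_min d10 d20 | exact: minle_l].
Qed.

Section PW.
Variable F : RR -> Prop.
Variable r : nat.

Lemma rat_cone_closed (K : 'rV[RR]_r -> Prop) : F_rat_cone F K -> closedset K.
Proof. by case=> gs [_ e]; apply: (closedset_ext e); apply: cone_closed. Qed.

Lemma pw_cont (f : 'rV[RR]_r -> 'rV[RR]_r) : pw_F_linear F f -> forall x, cont f x.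
Proof.
case=> S [[hc [_ [_ hcov]]] hl] x e e0.
pose P := fun (K : 'rV[RR]_r -> Prop) d =>
  (K x -> forall y, nrm (y - x) < d -> K y -> nrm (f y - f x) < e) /\
  (~ K x -> forall y, nrm (y - x) < d -> ~ K y).
have [d d0 hd] : exists2 d, 0 < d & forall K, List.In K S -> P K d.
  apply: fin_delta_list.
    move=> K d d' [h1 h2] _ hd'; split.
      by move=> hK y hy; apply: h1 => //; apply: lt_le_trans hd'.
    by move=> hK y hy; apply: h2 => //; apply: lt_le_trans hd'.
  move=> K hK; have [hx | hx] := classic (K x).
    have [A [_ hA]] := hl K hK.
    have b0 : 0 < mxb A + 1 by rewrite ltr_wpDl ?mxb_ge0.
    exists (e / (mxb A + 1)); first by rewrite divr_gt0.
    split => // _ y hy hKy; rewrite hA // hA // -mulmxBl.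
    apply: le_lt_trans (nrm_mul _ _) _.
    apply: (@le_lt_trans _ _ ((mxb A + 1) * nrm (y - x))).
      by apply: ler_wpM2r; [exact: nrm_ge0 | rewrite lerDl].
    by rewrite mulrC -ltr_pdivlMr.
  have [d d0 hd] := rat_cone_closed (hc K hK) hx.
  by exists d => //; split.
exists d => // y hy.
have [K [hK hKy]] := hcov y.
have [h1 h2] := hd K hK.
have [hx | hx] := classic (K x); first exact: h1.
by case: (h2 hx y hy).
Qed.

Lemma pw_hom (f : 'rV[RR]_r -> 'rV[RR]_r) : pw_F_linear F f ->
  forall a y, 0 <= a -> f (a *: y) = a *: f y.
Proof.
case=> S [[hc [_ [_ hcov]]] hl] a y a0.
have [K [hK hKy]] := hcov y.
have [A [_ hA]] := hl K hK.
have [gs [_ e]] := hc K hK.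
have hKa : K (a *: y).
  apply/e; have [c [c0 hc']] := proj1 (e y) hKy.
  exists (fun i => a * c i); split; first by move=> i; rewrite mulr_ge0.
  by rewrite hc' scaler_sumr; apply: eq_bigr => i _; rewrite scalerA.
by rewrite hA // hA // scalemxAl.
Qed.

Lemma pw_Fvec (G : RR -> Prop) (f : 'rV[RR]_r -> 'rV[RR]_r) : is_subring G ->
  (forall x, F x -> G x) -> pw_F_linear F f -> forall x, Fvec G x -> Fvec G (f x).
Proof.
move=> hG hFG [S [[hc [_ [_ hcov]]] hl]] x hx.
have [K [hK hKx]] := hcov x.
have [A [hAF hA]] := hl K hK.
rewrite hA // => j; rewrite mxE; apply: subring_sum => // i.
by case: hG => [_ [_ [_ hM]]]; apply: hM; [apply: hx | apply: hFG; apply: hAF].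
Qed.

End PW.

Lemma Rall_subring : is_subring Rall.
Proof. by []. Qed.

Section Lattice.
Variable F : RR -> Prop.
Hypothesis hF : is_subring F.
Variable M : PL F.
Local Notation mu := (pl_mu M).
Local Notation a0 := (pl_idx0 M).

Lemma mu_cont a b x : cont (mu a b) x.
Proof. by move=> e e0; apply: (pw_cont (pl_mu_pw _ M a b) x e0). Qed.

Lemma mu_hom a b l y : 0 <= l -> mu a b (l *: y) = l *: mu a b y.
Proof. by move=> hl; have := pw_hom (pl_mu_pw _ M a b) y hl. Qed.

Lemma mu_id_R a x : mu a a x = x.
Proof.
apply: (dense_eq (f := mu a a) (g := id)).
- by move=> z hz; apply: pl_mu_id; apply: intvec_F.
- by move=> l y hl; apply: mu_hom; apply: ltW.
- by [].
- exact: mu_cont.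
- exact: cont_id.
Qed.

Lemma mu_comp_R a b c x : mu b c (mu a b x) = mu a c x.
Proof.
apply: (dense_eq (f := fun y => mu b c (mu a b y)) (g := mu a c)).
- by move=> z hz; apply: pl_mu_comp; apply: intvec_F.
- by move=> l y hl; rewrite !mu_hom // ltW.
- by move=> l y hl; apply: mu_hom; apply: ltW.
- by apply: cont_comp; apply: mu_cont.
- exact: mu_cont.
Qed.

Lemma mu_inv_R a b x : mu b a (mu a b x) = x.
Proof. by rewrite mu_comp_R mu_id_R. Qed.

Lemma mu_Fvec (G : RR -> Prop) a b x : is_subring G -> (forall y, F y -> G y) ->
  Fvec G x -> Fvec G (mu a b x).
Proof. by move=> hG hFG; apply: pw_Fvec hG hFG (pl_mu_pw _ M a b) x. Qed.

Lemma pinv_elt (G : RR -> Prop) a x : is_subring G -> (forall y, F y -> G y) ->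
  Fvec G x -> elt M G (pinv M a x).
Proof.
move=> hG hFG hx; split; first by move=> b c; rewrite /pinv mu_comp_R.
by move=> b; apply: mu_Fvec.
Qed.

Lemma pinv_eltR a x : elt M Rall (pinv M a x).
Proof. by apply: pinv_elt. Qed.

Lemma elt_pinv (G : RR -> Prop) m a : elt M G m -> m = pinv M a (m a).
Proof. by case=> h _; apply: functional_extensionality => b; rewrite /pinv -h. Qed.

Lemma elt_R (G : RR -> Prop) m : elt M G m -> elt M Rall m.
Proof. by case=> h _; split. Qed.

Lemma pinvK a x : pinv M a x a = x.
Proof. exact: mu_id_R. Qed.

Lemma FvecD (G : RR -> Prop) (x y : 'rV[RR]_(pl_rank M)) : is_subring G ->
  Fvec G x -> Fvec G y -> Fvec G (x + y).
Proof. by move=> hG hx hy i; rewrite mxE; apply: subringD. Qed.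

Lemma FvecZ (G : RR -> Prop) l (x : 'rV[RR]_(pl_rank M)) : is_subring G ->
  G l -> Fvec G x -> Fvec G (l *: x).
Proof. by move=> [_ [_ [_ hM]]] hl hx i; rewrite mxE; apply: hM. Qed.

Lemma addc_elt (G : RR -> Prop) a m m' : is_subring G -> (forall y, F y -> G y) ->
  elt M G m -> elt M G m' -> elt M G (addc M a m m').
Proof.
move=> hG hFG [_ hm] [_ hm']; apply: pinv_elt => //; exact: FvecD.
Qed.

Lemma scale_elt (G : RR -> Prop) l m : is_subring G -> (forall y, F y -> G y) ->
  G l -> elt M G m -> elt M G (scale M l m).
Proof.
move=> hG hFG hl [_ hm]; apply: pinv_elt => //; exact: FvecZ.
Qed.

Lemma scale_pinv l x : scale M l (pinv M a0 x) = pinv M a0 (l *: x).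
Proof. by rewrite /scale pinvK. Qed.

Lemma addc_pinv x y : addc M a0 (pinv M a0 x) (pinv M a0 y) = pinv M a0 (x + y).
Proof. by rewrite /addc !pinvK. Qed.

Lemma int_elt (G : RR -> Prop) z : is_subring G -> (forall y, F y -> G y) ->
  intvec z -> elt M G (pinv M a0 z).
Proof. by move=> hG hFG hz; apply: pinv_elt => // i; apply: hFG; apply: intvec_F. Qed.

End Lattice.

Lemma min_lip (a b c d : RR) : `|Num.min a b - Num.min c d| <= `|a - c| + `|b - d|.
Proof.
have key (x y z t : RR) : Num.min x y - Num.min z t <= `|x - z| + `|y - t|.
  have h : Num.min x y - (`|x - z| + `|y - t|) <= Num.min z t.
    rewrite le_min; apply/andP; split.
      have := minle_l x y; have := ler_norm (x - z); have := normr_ge0 (y - t); lra.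
    have := minle_r x y; have := ler_norm (y - t); have := normr_ge0 (x - z); lra.
  lra.
rewrite ler_norml key andbT lerNl opprB.
by rewrite (distrC a) (distrC b); apply: key.
Qed.

Lemma minI_le (F : RR -> Prop) (M : PL F) (f : pl_idx M -> RR) a : minI M f <= f a.
Proof. exact: bigmin_le. Qed.

Section Points.
Variable F : RR -> Prop.
Hypothesis hF : is_subring F.
Variable M : PL F.
Local Notation a0 := (pl_idx0 M).

Definition LipM (f : pt M -> RR) : Prop :=
  exists C, forall m m', elt M Rall m -> elt M Rall m' ->
    `|f m - f m'| <= C * nrm (m a0 - m' a0).

Definition HomM (f : pt M -> RR) : Prop :=
  forall l m, 0 < l -> elt M Rall m -> f (scale M l m) = l * f m.

Lemma Lip_add f g : LipM f -> LipM g -> LipM (fun m => f m + g m).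
Proof.
move=> [C1 h1] [C2 h2]; exists (C1 + C2) => m m' hm hm'.
rewrite opprD addrACA mulrDl; apply: le_trans (ler_normD _ _) _.
by apply: lerD; [apply: h1 | apply: h2].
Qed.

Lemma Lip_min f g : LipM f -> LipM g -> LipM (fun m => Num.min (f m) (g m)).
Proof.
move=> [C1 h1] [C2 h2]; exists (C1 + C2) => m m' hm hm'.
apply: le_trans (min_lip _ _ _ _) _; rewrite mulrDl.
by apply: lerD; [apply: h1 | apply: h2].
Qed.

Lemma Hom_add f g : HomM f -> HomM g -> HomM (fun m => f m + g m).
Proof. by move=> h1 h2 l m hl hm; rewrite h1 // h2 // mulrDr. Qed.

Lemma Hom_min f g : HomM f -> HomM g -> HomM (fun m => Num.min (f m) (g m)).
Proof.
move=> h1 h2 l m hl hm; rewrite h1 // h2 //.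
by case: (leP (f m) (g m)) => h; [rewrite min_l ?ler_pM2l // | rewrite min_r ?ler_pM2l ?ltW // ?ltr_pM2l].
Qed.

Lemma Lip_cst f (c : RR) : LipM f -> LipM (fun m => c * f m).
Proof.
move=> [C h]; exists (`|c| * C) => m m' hm hm'.
by rewrite -mulrBr normrM -mulrA; apply: ler_wpM2l; [apply: normr_ge0 | apply: h].
Qed.

Lemma Hom_cst f (c : RR) : HomM f -> HomM (fun m => c * f m).
Proof. by move=> h l m hl hm; rewrite h // mulrCA. Qed.

Variable p : pt M -> RR.
Hypothesis hp : is_point M Rall p.

Lemma point_superadd u w : p (pinv M a0 u) + p (pinv M a0 w) <= p (pinv M a0 (u + w)).
Proof.
case: hp => _ [hadd _]; rewrite hadd; try exact: pinv_eltR.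
by rewrite -(addc_pinv hF); apply: minI_le.
Qed.

Lemma point_scale l u : 0 <= l -> p (pinv M a0 (l *: u)) = l * p (pinv M a0 u).
Proof.
case: hp => _ [_ hs] hl; rewrite -(scale_pinv hF) hs //; exact: pinv_eltR.
Qed.

Lemma point_zero : p (pinv M a0 0) = 0.
Proof. by rewrite -(scale0r (0 : 'rV[RR]_(pl_rank M))) point_scale // mul0r. Qed.

Lemma point_lower : exists2 C, 0 <= C & forall d, - (C * nrm d) <= p (pinv M a0 d).
Proof.
pose K i := `|p (pinv M a0 'e_i)| + `|p (pinv M a0 (- 'e_i))| : RR.
have K0 i : 0 <= K i by rewrite addr_ge0.
exists (\sum_i K i); first exact: sumr_ge0.
move=> d.
have hterm i : - (K i * nrm d) <= p (pinv M a0 (d ord0 i *: 'e_i)).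
  have hn : `|d ord0 i| <= nrm d by apply: nrm_coord.
  apply: (@le_trans _ _ (- (K i * `|d ord0 i|))).

    by rewrite lerN2; apply: ler_wpM2l.
  case: (lerP 0 (d ord0 i)) => hd.
    rewrite point_scale // ger0_norm //.
    rewrite -mulNr mulrC ler_wpM2l //.
    have h1 := ler_norm (- p (pinv M a0 'e_i)); rewrite normrN in h1.
    have := normr_ge0 (p (pinv M a0 (- 'e_i))); rewrite /K; lra.
  have -> : d ord0 i *: 'e_i = (- d ord0 i) *: (- 'e_i :'rV[RR]_(pl_rank M)).
    by rewrite scaleNr scalerN opprK.
  have hd' : 0 <= - d ord0 i by rewrite oppr_ge0 ltW.
  rewrite point_scale // ltr0_norm //.
  rewrite -mulNr mulrC ler_wpM2l //.
  have h1 := ler_norm (- p (pinv M a0 (- 'e_i))); rewrite normrN in h1.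
  have := normr_ge0 (p (pinv M a0 'e_i)); rewrite /K; lra.
rewrite {2}(row_sum_delta d) mulr_suml -sumrN.
apply: (big_ind2 (fun s u => s <= p (pinv M a0 u))).
- by rewrite point_zero.
- move=> x1 x2 y1 y2 h1 h2; apply: le_trans (point_superadd _ _); exact: lerD.
- by move=> i _; apply: hterm.
Qed.

Lemma point_lip : LipM p.
Proof.
have [C C0 hC] := point_lower.
have half m m' : elt M Rall m -> elt M Rall m' -> p m - p m' <= C * nrm (m a0 - m' a0).
  move=> hm hm'.
  rewrite (elt_pinv a0 hm) (elt_pinv a0 hm') !(pinvK hF).
  have h2 := point_superadd (m a0) (m' a0 - m a0).
  have e : m a0 + (m' a0 - m a0) = m' a0 by rewrite addrC subrK.
  rewrite e in h2; have h1 := hC (m' a0 - m a0); rewrite nrmB in h1; lra.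
exists C => m m' hm hm'; rewrite ler_norml half // andbT lerNl opprB nrmB.
exact: half.
Qed.

Lemma point_hom : HomM p.
Proof. by case: hp => _ [_ hs] l m hl hm; apply: hs => //; apply: ltW. Qed.

End Points.

Section Dense.
Variable F : RR -> Prop.
Hypothesis hF : is_subring F.
Variable M : PL F.
Local Notation a0 := (pl_idx0 M).

Lemma dense_M (G : RR -> Prop) (f g : pt M -> RR) :
  is_subring G -> (forall y, F y -> G y) ->
  LipM f -> LipM g -> HomM f -> HomM g ->
  (forall m, elt M G m -> f m = g m) -> forall m, elt M Rall m -> f m = g m.
Proof.
move=> hG hFG [C1 h1] [C2 h2] hf hg hfg m hm.
apply/eqP; rewrite -subr_eq0 -normr_eq0; apply/eqP.
apply/eqP; rewrite eq_le normr_ge0 andbT; apply/ler_addgt0Pr => e e0; rewrite add0r.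
set x := m a0.
set C := `|C1| + `|C2|.
have hC0 : 0 <= C by rewrite addr_ge0.
have [N [hN hNe]] := archi_N ((pl_rank M)%:R * C) e0.
have hNp : 0 < N%:R :> RR by rewrite ltr0n.
set z := zapprox N x.
have hz : elt M G (pinv M a0 z) by apply: int_elt => //; apply: zapprox_int.
set mq := scale M (N%:R^-1) (pinv M a0 z).
have hNi : 0 < N%:R^-1 :> RR by rewrite invr_gt0.
have hmq : elt M Rall mq by apply: scale_elt => //; apply: elt_R hz.
have eq : f mq = g mq.
  rewrite /mq hf ?hg //; [by rewrite hfg | exact: elt_R hz | exact: elt_R hz].
have hd : nrm (m a0 - mq a0) <= (pl_rank M)%:R / N%:R.
  by rewrite /mq (scale_pinv hF) (pinvK hF); apply: zapprox_close.
have k1 := h1 m mq hm hmq; have k2 := h2 mq m hmq hm.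
rewrite nrmB in k2.
have e1 : C1 * nrm (m a0 - mq a0) <= `|C1| * ((pl_rank M)%:R / N%:R).
  apply: le_trans (ler_norm _) _; rewrite normrM (ger0_norm (nrm_ge0 _)).
  by apply: ler_wpM2l => //; apply: normr_ge0.
have e2 : C2 * nrm (m a0 - mq a0) <= `|C2| * ((pl_rank M)%:R / N%:R).
  apply: le_trans (ler_norm _) _; rewrite normrM (ger0_norm (nrm_ge0 _)).
  by apply: ler_wpM2l => //; apply: normr_ge0.
have e3 : C * ((pl_rank M)%:R / N%:R) < e by rewrite mulrA (mulrC C).
have : `|f m - g m| <= `|f m - f mq| + `|g mq - g m|.
  rewrite -eq; have -> : f m - g m = (f m - f mq) + (f mq - g m) by rewrite addrA subrK.
  exact: ler_normD.
move=> h; apply: le_trans h _; apply: ltW; apply: le_lt_trans e3.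
by rewrite /C mulrDl; apply: lerD; [apply: le_trans k1 e1 | apply: le_trans k2 e2].
Qed.

End Dense.

Lemma In_map (A B : Type) (f : A -> B) (l : seq A) x : List.In x l -> List.In (f x) (map f l).
Proof. elim: l => //= y l ih [<-|h]; [by left | by right; apply: ih]. Qed.

Lemma In_map_inv (A B : Type) (f : A -> B) (l : seq A) y :
  List.In y (map f l) -> exists x, f x = y /\ List.In x l.
Proof.
elim: l => //= x l ih [<-|h]; first by exists x; split => //; left.
by have [x' [e h']] := ih h; exists x'; split => //; right.
Qed.

Lemma In_cat (A : Type) (s s' : seq A) x : List.In x (s ++ s') <-> List.In x s \/ List.In x s'.
Proof.
elim: s => /= [|y s ih]; first by split; [right | case].
split.
  by case=> [<-|h]; [left; left | case/ih: h => h; [left; right | right]].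
by case=> [[<-|h]|h]; [left | right; apply/ih; left | right; apply/ih; right].
Qed.

Lemma min_seq_cons2 (x y : RR) t : min_seq [:: x, y & t] = Num.min y (min_seq (x :: t)).
Proof. by []. Qed.

Lemma min_seq_le (l : seq RR) z : List.In z l -> min_seq l <= z.
Proof.
case: l => // x t; elim: t => [|y t ih] /=.
  by case=> // ->.
case=> [e|[e|h]].
- exact: le_trans (minle_r _ _) (ih (or_introl e)).
- by rewrite -e; exact: minle_l.
- exact: le_trans (minle_r _ _) (ih (or_intror h)).
Qed.

Lemma min_seq_in (l : seq RR) : l <> [::] -> List.In (min_seq l) l.
Proof.
case: l => // x t _; elim: t x => [|y t ih] x /=; first by left.
case: (leP y (foldr Num.min x t)) => h.
  by right; left.
by have := ih x; case=> [e|h']; [left | right; right].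
Qed.

Lemma min_seq_char (l : seq RR) y : List.In y l -> (forall z, List.In z l -> y <= z) ->
  min_seq l = y.
Proof.
move=> hy hz; apply/eqP; rewrite eq_le min_seq_le //=.
by apply: (hz); apply: min_seq_in; case: (l) hy.
Qed.

Lemma min_seq_cat (s s' : seq RR) : s <> [::] -> s' <> [::] ->
  min_seq (s ++ s') = Num.min (min_seq s) (min_seq s').
Proof.
move=> hs hs'; apply: min_seq_char.
  by case: (leP (min_seq s) (min_seq s')) => h;
    [apply/In_cat; left; apply: min_seq_in
    | apply/In_cat; right; apply: min_seq_in].
move=> z /In_cat [h|h].
  by apply: le_trans (minle_l _ _) (min_seq_le h).
by apply: le_trans (minle_r _ _) (min_seq_le h).
Qed.

Lemma min_seq_scale (l : seq RR) c : 0 <= c ->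
  min_seq [seq c * x | x <- l] = c * min_seq l.
Proof.
move=> c0; case: l => [|x t]; first by rewrite /= mulr0.
apply: min_seq_char.
  by apply: (In_map (fun x => c * x)); apply: min_seq_in.
move=> z hz; have [y [e hy]] := In_map_inv hz; rewrite -e; apply: ler_wpM2l => //; exact: min_seq_le.
Qed.

Section MinSeqLip.
Variable F : RR -> Prop.
Variable M : PL F.

Lemma Lip_min_seq (fs : seq (pt M -> RR)) :
  (forall f, List.In f fs -> LipM f) -> LipM (fun m => min_seq [seq f m | f <- fs]).
Proof.
case: fs => [|f0 t]; first by move=> _; exists 0 => m m' _ _; rewrite subrr normr0 mul0r.
elim: t f0 => [|f1 t ih] f0 h /=.
  by apply: h; left.
apply: Lip_min; first by apply: h; right; left.
apply: ih => f hf; apply: h; case: hf => [<-|hf]; [by left | by right; right].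
Qed.

Lemma Hom_min_seq (fs : seq (pt M -> RR)) :
  (forall f, List.In f fs -> HomM f) -> HomM (fun m => min_seq [seq f m | f <- fs]).
Proof.
case: fs => [|f0 t]; first by move=> _ l m _ _; rewrite mulr0.
elim: t f0 => [|f1 t ih] f0 h /=.
  by apply: h; left.
apply: Hom_min; first by apply: h; right; left.
apply: ih => f hf; apply: h; case: hf => [<-|hf]; [by left | by right; right].
Qed.

End MinSeqLip.
Lemma In_pairs (A B C : Type) (G : A -> B -> C) s s' z :
  List.In z [seq G x y | x <- s, y <- s'] <->
  exists x y, [/\ List.In x s, List.In y s' & z = G x y].
Proof.
elim: s => [|x s ih] /=; first by split => // -[x [y []]].
rewrite In_cat ih; split.
  case=> [h|[x' [y [h1 h2 ->]]]].
    by have [y [<- hy]] := In_map_inv h; exists x, y; split => //; left.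
  by exists x', y; split => //; right.
case=> [x' [y [[<-|h1] h2 ->]]]; [left; exact: In_map | right; by exists x', y; split].
Qed.
Lemma In_flatten (A : Type) (L : seq (seq A)) z :
  List.In z (flatten L) <-> exists l, List.In l L /\ List.In z l.
Proof.
elim: L => [|l L ih] /=; first by split => // -[l []].
rewrite In_cat ih; split.
  by case=> [h|[l' [h1 h2]]]; [exists l; split => //; left | exists l'; split => //; right].
by case=> [l' [[<-|h1] h2]]; [left | right; exists l'].
Qed.

Lemma eq_map_In (A B : Type) (f g : A -> B) (l : seq A) :
  (forall x, List.In x l -> f x = g x) -> map f l = map g l.
Proof.
elim: l => //= x l ih h; rewrite h; last by left.
by rewrite ih // => y hy; apply: h; right.
Qed.

Lemma In_mem (T : eqType) (x : T) (l : seq T) : x \in l -> List.In x l.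
Proof.
elim: l => //= y l ih; rewrite in_cons => /orP [/eqP ->|h]; [by left | by right; apply: ih].
Qed.

Lemma bigmin_in (I : Type) (r : seq I) (g : I -> RR) x0 :
  \big[Num.min/x0]_(i <- r) g i = x0 \/ List.In (\big[Num.min/x0]_(i <- r) g i) (map g r).
Proof.
elim: r => [|i r ih]; first by rewrite big_nil; left.
rewrite big_cons /=; case: (leP (g i) (\big[Num.min/x0]_(j <- r) g j)) => h.
  by right; left.
by case: ih => ih; [left | right; right].
Qed.

Lemma minI_attained (F : RR -> Prop) (N : PL F) (g : pl_idx N -> RR) :
  exists a, minI N g = g a.
Proof.
rewrite /minI; case: (bigmin_in (index_enum (pl_idx N)) g (g (pl_idx0 N))) => h.
  by exists (pl_idx0 N).
by have [a [e _]] := In_map_inv h; exists a.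
Qed.

Lemma In_enum (I : finType) (a : I) : List.In a (enum I).
Proof. by apply: In_mem; rewrite mem_enum. Qed.

Lemma minI_seq (F : RR -> Prop) (N : PL F) (g : pl_idx N -> RR) :
  min_seq [seq g a | a <- enum (pl_idx N)] = minI N g.
Proof.
apply: min_seq_char.
  by have [a ->] := minI_attained g; apply: In_map; apply: In_enum.
by move=> z hz; have [a [<- _]] := In_map_inv hz; apply: minI_le.
Qed.

Lemma min_seq_map_nonempty (A : Type) (l : seq A) (f : A -> RR) : l <> [::] -> map f l <> [::].
Proof. by case: l. Qed.

Section Main.
Variables F F' : RR -> Prop.
Hypothesis hF : is_subring F.
Hypothesis hF' : is_subring F'.
Hypothesis hFF' : forall x, F x -> F' x.
Variables M N : PL F.
Variable v : pt M -> pt N -> RR.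
Variable w : pt N -> pt M -> RR.
Hypothesis hv : half_dual_pair F' M N v.
Hypothesis hw : half_dual_pair F' N M w.
Hypothesis hd : forall m n, elt M F' m -> elt N F' n -> v m n = w n m.

Let hwR : forall n, elt N Rall n -> is_point M Rall (w n).
Proof. by case: hw. Qed.
Let hwF : forall n, elt N F' n -> is_point M F' (w n).
Proof. by case: hw => _ []. Qed.
Let hwsurj : forall p, is_point M F' p ->
  exists n, elt N F' n /\ forall m, elt M F' m -> w n m = p m.
Proof. by case: hw => _ [_ [_ []]]. Qed.
Let hvF : forall m, elt M F' m -> is_point N F' (v m).
Proof. by case: hv => _ []. Qed.
Let hvsurj : forall p, is_point N F' p ->
  exists m, elt M F' m /\ forall n, elt N F' n -> v m n = p n.
Proof. by case: hv => _ [_ [_ []]]. Qed.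

Let FRall : forall y, F y -> Rall y. Proof. by []. Qed.

Lemma w_lip n : elt N F' n -> LipM (w n).
Proof. by move=> hn; apply: (point_lip hF); apply: hwR; apply: elt_R hn. Qed.

Lemma w_hom n : elt N F' n -> HomM (w n).
Proof. by move=> hn; apply: point_hom; apply: hwR; apply: elt_R hn. Qed.

Definition wmin (s : seq (pt N)) (m : pt M) : RR := min_seq [seq w n m | n <- s].

Lemma wmin_lip s : (forall n, List.In n s -> elt N F' n) -> LipM (wmin s).
Proof.
move=> hs.
have -> : wmin s = (fun m => min_seq [seq f m | f <- map w s]).
  by apply: functional_extensionality => m; rewrite /wmin -map_comp.
apply: Lip_min_seq => f hf; have [n [<- hn]] := In_map_inv hf; apply: w_lip; exact: hs.
Qed.

Lemma wmin_hom s : (forall n, List.In n s -> elt N F' n) -> HomM (wmin s).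
Proof.
move=> hs.
have -> : wmin s = (fun m => min_seq [seq f m | f <- map w s]).
  by apply: functional_extensionality => m; rewrite /wmin -map_comp.
apply: Hom_min_seq => f hf; have [n [<- hn]] := In_map_inv hf; apply: w_hom; exact: hs.
Qed.

Lemma elt0 : elt M Rall (pinv M (pl_idx0 M) 0).
Proof. exact: pinv_eltR. Qed.

Lemma pair_id n1 n2 m : elt N F' n1 -> elt N F' n2 -> elt M Rall m ->
  min_seq [seq w (addc N a n1 n2) m | a <- enum (pl_idx N)] = w n1 m + w n2 m.
Proof.
move=> h1 h2; apply: (@dense_M F hF M F' (fun m =>
   min_seq [seq w (addc N a n1 n2) m | a <- enum (pl_idx N)]) (fun m => w n1 m + w n2 m) hF' hFF').
- have -> : (fun m => min_seq [seq w (addc N a n1 n2) m | a <- enum (pl_idx N)]) =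
     (fun m => min_seq [seq f m | f <- [seq w (addc N a n1 n2) | a <- enum (pl_idx N)]]).
    by apply: functional_extensionality => m'; rewrite -map_comp.
  apply: Lip_min_seq => f hf; have [a [<- _]] := In_map_inv hf; apply: w_lip; exact: addc_elt.
- by apply: Lip_add; apply: w_lip.
- have -> : (fun m => min_seq [seq w (addc N a n1 n2) m | a <- enum (pl_idx N)]) =
     (fun m => min_seq [seq f m | f <- [seq w (addc N a n1 n2) | a <- enum (pl_idx N)]]).
    by apply: functional_extensionality => m'; rewrite -map_comp.
  apply: Hom_min_seq => f hf; have [a [<- _]] := In_map_inv hf; apply: w_hom; exact: addc_elt.
- by apply: Hom_add; apply: w_hom.
- move=> m' hm'.
  rewrite (eq_map_In (g := fun a => v m' (addc N a n1 n2))); last first.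
    by move=> a _; rewrite hd //; apply: addc_elt.
  rewrite (minI_seq (fun a => v m' (addc N a n1 n2))) -!hd //.
  case: (hvF hm') => _ [hadd _]; by rewrite hadd.
Qed.

Lemma wmin_star s s' m : (forall n, List.In n s -> elt N F' n) ->
  (forall n, List.In n s' -> elt N F' n) -> s <> [::] -> s' <> [::] -> elt M Rall m ->
  min_seq [seq w n m | n <- flatten [seq [seq addc N a n1 n2 | a <- enum (pl_idx N)] | n1 <- s, n2 <- s']]
  = wmin s m + wmin s' m.
Proof.
move=> hs hs' ne ne' hm; apply: min_seq_char.
- have [n1 [e1 i1]] := In_map_inv (min_seq_in (min_seq_map_nonempty (f := fun n => w n m) ne)).
  have [n2 [e2 i2]] := In_map_inv (min_seq_in (min_seq_map_nonempty (f := fun n => w n m) ne')).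
  rewrite /wmin -e1 -e2 -(pair_id (hs _ i1) (hs' _ i2) hm).
  have hne : [seq w (addc N a n1 n2) m | a <- enum (pl_idx N)] <> [::].
    by apply: min_seq_map_nonempty; have := In_enum (pl_idx0 N); case: (enum _).
  have [a [ea _]] := In_map_inv (min_seq_in hne); rewrite -ea.
  apply: In_map; apply/In_flatten; exists [seq addc N a' n1 n2 | a' <- enum (pl_idx N)].
  split; last by apply: In_map; apply: In_enum.
  by apply/In_pairs; exists n1, n2; split.
- move=> z hz; have [n [<- hn]] := In_map_inv hz.
  move: hn => /In_flatten [l [/In_pairs [n1 [n2 [i1 i2 ->]]] hl]].
  have [a [<- _]] := In_map_inv hl.
  apply: (@le_trans _ _ (w n1 m + w n2 m)).
    by apply: lerD; apply: min_seq_le; apply: In_map.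
  rewrite -(pair_id (hs _ i1) (hs' _ i2) hm); apply: min_seq_le.
  by apply: (In_map (fun a => w (addc N a n1 n2) m)); apply: In_enum.
Qed.

Lemma wscale l n m : F l -> 0 <= l -> elt N F' n -> elt M Rall m ->
  w (scale N l n) m = l * w n m.
Proof.
move=> hl l0 hn; apply: (@dense_M F hF M F' (fun m => w (scale N l n) m)
  (fun m => l * w n m) hF' hFF').
- by apply: w_lip; apply: scale_elt => //; apply: hFF'.
- by apply: Lip_cst; apply: w_lip.
- by apply: w_hom; apply: scale_elt => //; apply: hFF'.
- by apply: Hom_cst; apply: w_hom.
- move=> m' hm'; rewrite -hd //; last by apply: scale_elt => //; apply: hFF'.
  rewrite -hd //; case: (hvF hm') => _ [_ hs]; apply: hs => //; exact: hFF'.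
Qed.

Lemma pconv_self s n : List.In n s -> elt N F' n -> pconv F' N s n.
Proof. by move=> hi hn; split => // p a _ _ h; apply: h. Qed.

Lemma le_wmin s s' m : Svalid F' N (Some s) -> Svalid F' N (Some s') ->
  setE (pconv F' N s) (pconv F' N s') -> elt M F' m -> wmin s' m <= wmin s m.
Proof.
move=> [ne hs] [ne' hs'] e hm.
have [n [en i]] := In_map_inv (min_seq_in (min_seq_map_nonempty (f := fun n => w n m) ne)).
rewrite /wmin -en.
have : pconv F' N s' n by apply/e; apply: pconv_self => //; apply: hs.
case=> hn h; rewrite -hd //; apply: h => //.
- exact: hvF.
- have [x [ex ix]] := In_map_inv (min_seq_in (min_seq_map_nonempty (f := fun n => w n m) ne')).
  rewrite -ex -hd //; last exact: hs'.
  by case: (hvF hm) => hvp _; apply: hvp; apply: hs'.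
- move=> x hx; rewrite hd //; last exact: hs'.
  by apply: min_seq_le; apply: (In_map (fun n => w n m)).
Qed.

Definition ext := ext_map M N w.

Lemma ext_some s m : ext (Some s) m = Some (wmin s m).
Proof. by []. Qed.

Lemma Svalid_oplus x y : Svalid F' N x -> Svalid F' N y -> Svalid F' N (Soplus N x y).
Proof.
case: x => [s|] // [ne hs]; case: y => [s'|] // [ne' hs']; split.
  by case: s ne {hs}.
by move=> n /In_cat [h|h]; [apply: hs | apply: hs'].
Qed.

Lemma Svalid_star x y : Svalid F' N x -> Svalid F' N y -> Svalid F' N (Sstar N x y).
Proof.
case: x => [s|] // [ne hs]; case: y => [s'|] // [ne' hs']; split.
  case: s ne {hs} => // n1 s _; case: s' ne' {hs'} => // n2 s' _ /=.
  by have := In_enum (pl_idx0 N); case: (enum _).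
move=> n /In_flatten [l [/In_pairs [n1 [n2 [i1 i2 ->]]] hl]].
have [a [<- _]] := In_map_inv hl; apply: addc_elt => //; [apply: hs | apply: hs'] => //.
Qed.

Lemma Svalid_scale l x : F l -> Svalid F' N x -> Svalid F' N (Sscale N l x).
Proof.
move=> hl; case: x => [s|] // [ne hs]; split; first by case: s ne {hs}.
move=> n hn; have [n' [<- hn']] := In_map_inv hn; apply: scale_elt => //; [exact: hFF' | exact: hs].
Qed.

Lemma oplus_ok x y : Svalid F' N x -> Svalid F' N y ->
  feq M (ext (Soplus N x y)) (fun m => tmin (ext x m) (ext y m)).
Proof.
case: x => [s|] //; case: y => [s'|] // [ne hs] [ne' hs'] m hm.
by rewrite /= map_cat min_seq_cat //; apply: min_seq_map_nonempty.
Qed.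

Lemma star_ok x y : Svalid F' N x -> Svalid F' N y ->
  feq M (ext (Sstar N x y)) (fun m => tadd (ext x m) (ext y m)).
Proof.
case: x => [s|] //; case: y => [s'|] // [ne hs] [ne' hs'] m hm.
by rewrite /ext /ext_map /Sstar /tadd wmin_star.
Qed.

Lemma scale_ok l x : F l -> 0 <= l -> Svalid F' N x ->
  feq M (ext (Sscale N l x)) (fun m => tscale l (ext x m)).
Proof.
move=> hl l0; case: x => [s|] // [ne hs] m hm.
rewrite /ext /ext_map /Sscale /tscale -map_comp.
rewrite (eq_map_In (g := fun n => l * w n m)); last first.
  by move=> n hn /=; apply: wscale => //; apply: hs.
by rewrite -[in RHS](min_seq_scale _ l0) -map_comp.
Qed.

Lemma ext_pgen x : Svalid F' N x -> Pgen F' M (ext x).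
Proof.
case: x => [s|]; last by move=> _; apply: Pg_inf.
case: s => [|n t] [ne hs] //.
have hn : elt N F' n by apply: hs; left.
have base : Pgen F' M (fun m => Some (w n m)).
  by apply: Pg_point; [apply: hwR; apply: elt_R hn | apply: hwF].
elim: t hs {ne} => [|n2 t ih] hs; first exact: base.
have ih' := ih (fun x hx => hs x (match hx with or_introl e => or_introl e
                                  | or_intror h => or_intror (or_intror h) end)).
have h2 : Pgen F' M (fun m => Some (w n2 m)).
  have hn2 : elt N F' n2 by apply: hs; right; left.
  by apply: Pg_point; [apply: hwR; apply: elt_R hn2 | apply: hwF].
change (Pgen F' M (fun m => tmin (Some (w n2 m)) (ext (Some (n :: t)) m))).
exact: (@Pg_min _ F' M _ _ h2 ih').
Qed.

Lemma ext_surj f : Pgen F' M f -> exists x, Svalid F' N x /\ feq M (ext x) f.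
Proof.
elim=> {f}.
- move=> p hpR hpF; have [n [hn hnp]] := hwsurj hpF.
  exists (Some [:: n]); split; first by split => // n' [<-|].
  move=> m hm; rewrite ext_some /wmin /=; congr Some.
  apply: (@dense_M F hF M F' (w n) p hF' hFF') => //.
  + exact: w_lip.
  + exact: (point_lip hF hpR).
  + exact: w_hom.
  + exact: point_hom.
- by exists None.
- move=> f g _ [x [hx ex]] _ [y [hy ey]]; exists (Soplus N x y); split.
    exact: Svalid_oplus.
  by move=> m hm; rewrite (oplus_ok hx hy hm) ex // ey.
- move=> f g _ [x [hx ex]] _ [y [hy ey]]; exists (Sstar N x y); split.
    exact: Svalid_star.
  by move=> m hm; rewrite (star_ok hx hy hm) ex // ey.
- move=> l f hl l0 _ [x [hx ex]]; exists (Sscale N l x); split.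
    exact: Svalid_scale.
  by move=> m hm; rewrite (scale_ok hl l0 hx hm) ex.
Qed.

Lemma seq_feq x y : Svalid F' N x -> Svalid F' N y ->
  (Seq F' N x y <-> feq M (ext x) (ext y)).
Proof.
case: x => [s|]; case: y => [s'|] //=.
- move=> vs vs'; split.
  + move=> e m hm; congr Some; change (wmin s m = wmin s' m).
    apply: (@dense_M F hF M F' (wmin s) (wmin s') hF' hFF') => //.
    * by apply: wmin_lip; case: vs.
    * by apply: wmin_lip; case: vs'.
    * by apply: wmin_hom; case: vs.
    * by apply: wmin_hom; case: vs'.
    * move=> m' hm'; apply/eqP; rewrite eq_le.
      rewrite (le_wmin vs' vs _ hm') ?(le_wmin vs vs' _ hm') //.
      by move=> n; split => /e.
  + move=> e.
    have half (t t' : seq (pt N)) : Svalid F' N (Some t) -> Svalid F' N (Some t') ->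
        (forall m, elt M Rall m -> wmin t m = wmin t' m) ->
        forall n, pconv F' N t n -> pconv F' N t' n.
      move=> [nt ht] [nt' ht'] ett n [hn hc]; split => // p a hp ha hpa.
      have [m [hm hmp]] := hvsurj hp.
      rewrite -hmp //; apply: hc => //; first exact: hvF.
      move=> x hx.
      rewrite hd //; last exact: ht.
      apply: le_trans (min_seq_le (In_map (fun n => w n m) hx)).
      rewrite -/(wmin t m) ett; last exact: elt_R hm.
      have [y [ey iy]] := In_map_inv (min_seq_in (min_seq_map_nonempty (f := fun n => w n m) nt')).
      rewrite /wmin -ey -hd //; last exact: ht'.
      by rewrite hmp //; [apply: hpa | apply: ht'].
    have e' m : elt M Rall m -> wmin s m = wmin s' m.
      by move=> hm; have := e m hm; case.
    move=> n; split; [apply: half | apply: half] => //.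
    by move=> m hm; rewrite e'.
- move=> _ _; split => // /(_ _ elt0).
  by [].
- move=> _ _; split => // /(_ _ elt0).
  by [].
Qed.

Lemma main_half : semialg_iso F' M N (ext_map M N w).
Proof.
split; first exact: seq_feq.
split; first exact: ext_pgen.
split; first exact: ext_surj.
split; first by move=> x y hx hy; apply: oplus_ok.
split; first by move=> x y hx hy; apply: star_ok.
split; first by move=> l x hl l0 hx; apply: scale_ok.
by [].
Qed.

End Main.

Unset Implicit Arguments.

Theorem mainTheorem8 (F F' : RR -> Prop) (M N : PL F)
  (v : pt M -> pt N -> RR) (w : pt N -> pt M -> RR) :
  is_subring F -> is_subring F' -> (forall x, F x -> F' x) ->
  strict_dual_pair F' M N v w ->
  semialg_iso F' M N (ext_map M N w) /\ semialg_iso F' N M (ext_map N M v).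
Proof.
move=> hF hF' hFF' [hv [hw hd]]; split.
  exact: (main_half hF hF' hFF' hv hw hd).
apply: (main_half hF hF' hFF' hw hv) => n m hn hm; symmetry; exact: hd.
Qed.
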